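(* Let $G$ be a group, $K\lhd G$ a normal subgroup and $L\subset K$ a subset whose normal closure in $G$ is $K$. Then $L^{\#\#}=K^{\#\#}$ as ideals of $\kappa G^\#$.
   Context: Let $\kappa$ be a field of characteristic $0$. For a group $G$, let $*:\kappa G\to\kappa G$ be the $\kappa$-linear map with $g^*=g^{-1}$ for $g\in G$, and $(\kappa G)^*$ its fixed points. $A_G$ is the quotient of $\kappa G$ by the two-sided ideal generated by all $ab-ba$ with $a\in\kappa G$, $b\in(\kappa G)^*$; $*$ descends to $A_G$, and $\kappa G^\#=\{x\in A_G:x^*=x\}$ (a commutative subring of the centre of $A_G$). Group elements are identified with their images in $A_G$, and $\bar x=\tfrac12(x+x^* )$ for $x\in A_G$. For a subset $L\subset G$, $L^{\#\#}$ is the ideal of $\kappa G^\#$ generated by $\{\overline{xl}-\overline{xl^{-1}}: x\in A_G,\ l\in L\}$ (equivalently by $\{\overline{bl}-\overline{bl^{-1}}: b\in B, l\in L\}$ for any generating set $B$ of the $\kappa G^\#$-module $\Lambda_G=\{x\in A_G:x^*=-x\}$). *)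

(* Defs.v *)
(* G is an arbitrary (possibly infinite) group: a
   [groupType] from mathcomp/boot/monoid.v (a choiceType with a group law). *)
From HB Require Import structures.
From mathcomp Require Import all_boot all_order all_algebra.
Set Implicit Arguments. Unset Strict Implicit. Unset Printing Implicit Defensive.
Import GRing.Theory.
Local Open Scope ring_scope.

Section GroupAlgebra.
Variables (k : fieldType) (G : groupType).

(* Elements of the group algebra kG are represented by finite formal sums
   [:: (c_1, g_1); ...; (c_n, g_n)] standing for  sum_i c_i g_i. *)
Definition kg := seq (k * G).

Definition kg_coef (x : kg) (g : G) : k := \sum_(p <- x | p.2 == g) p.1.
Definition kg_eq (x y : kg) : Prop := forall g, kg_coef x g = kg_coef y g.

Definition kg_of (g : G) : kg := [:: (1, g)].
Definition kg_add (x y : kg) : kg := x ++ y.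
Definition kg_scale (c : k) (x : kg) : kg := [seq (c * p.1, p.2) | p <- x].
Definition kg_sub (x y : kg) : kg := kg_add x (kg_scale (-1) y).
Definition kg_mul (x y : kg) : kg :=
  [seq (p.1 * q.1, (p.2 * q.2)%g) | p <- x, q <- y].
Definition kg_star (x : kg) : kg := [seq (p.1, (p.2)^-1%g) | p <- x].

(* The two-sided ideal I of kG generated by all  a b - b a  with a in kG and
   b fixed by star (i.e. star b = b in kG): finite sums of  u (a b - b a) v. *)
Definition in_I (x : kg) : Prop :=
  exists s : seq (kg * kg * kg * kg),
    (forall t, t \in s -> kg_eq (kg_star t.1.2) t.1.2) /\
    kg_eq x (flatten [seq kg_mul (kg_mul t.1.1.1
                         (kg_sub (kg_mul t.1.1.2 t.1.2) (kg_mul t.1.2 t.1.1.2)))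
                         t.2 | t <- s]).

Definition AG_eq (x y : kg) : Prop := in_I (kg_sub x y).

Definition in_sharp (x : kg) : Prop := AG_eq (kg_star x) x.

Definition kg_bar (x : kg) : kg := kg_scale (2%:R)^-1 (kg_add x (kg_star x)).

Definition sharp_gen (x : kg) (l : G) : kg :=
  kg_sub (kg_bar (kg_mul x (kg_of l))) (kg_bar (kg_mul x (kg_of (l^-1)%g))).

(* Membership (in A_G, up to AG_eq) in L^##, the ideal of the commutative
   ring kG^# generated by { bar(x l) - bar(x l^-1) : x in A_G, l in L }:
   finite sums  sum_i r_i (bar(x_i l_i) - bar(x_i l_i^-1)) with r_i in kG^#. *)
Definition in_sharpsharp (L : G -> Prop) (y : kg) : Prop :=
  exists s : seq (kg * kg * G),
    (forall t, t \in s -> in_sharp t.1.1 /\ L t.2) /\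
    AG_eq y (flatten [seq kg_mul t.1.1 (sharp_gen t.1.2 t.2) | t <- s]).

End GroupAlgebra.

Definition is_subgroup (G : groupType) (H : G -> Prop) : Prop :=
  H 1%g /\ forall x y, H x -> H y -> H (x * y^-1)%g.

Definition is_normal (G : groupType) (H : G -> Prop) : Prop :=
  is_subgroup H /\ forall x g, H x -> H (x ^ g)%g.

Definition is_normal_closure (G : groupType) (L K : G -> Prop) : Prop :=
  is_normal K /\ (forall l, L l -> K l) /\
  forall N : G -> Prop, is_normal N -> (forall l, L l -> N l) ->
    forall x, K x -> N x.

(* Main.v *)
Require Import Defs.
From HB Require Import structures.
From mathcomp Require Import all_boot all_order all_algebra.
From Stdlib Require Import Setoid Morphisms ClassicalEpsilon.
Set Implicit Arguments. Unset Strict Implicit. Unset Printing Implicit Defensive.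
Import GRing.Theory.


Section Ev.
Local Open Scope ring_scope.
Variables (k : fieldType) (G : groupType).
Implicit Types (x y z : kg k G) (F : G -> k).

Definition ev x F := \sum_(p <- x) p.1 * F p.2.

Lemma ev_cat x y F : ev (x ++ y) F = ev x F + ev y F.
Proof. by rewrite /ev big_cat. Qed.
Lemma ev_nil F : ev [::] F = 0. Proof. by rewrite /ev big_nil. Qed.
Lemma ev_scale c x F : ev (kg_scale c x) F = c * ev x F.
Proof. rewrite /ev big_map mulr_sumr; apply: eq_bigr => p _ /=; by rewrite mulrA. Qed.
Lemma ev_star x F : ev (kg_star x) F = ev x (fun g => F g^-1%g).
Proof. by rewrite /ev big_map. Qed.
Lemma ev_of g F : ev (kg_of k g) F = F g.
Proof. by rewrite /ev big_seq1 mul1r. Qed.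
Lemma ev_mul x y F :
  ev (kg_mul x y) F = ev x (fun a => ev y (fun b => F (a * b)%g)).
Proof.
rewrite /ev /kg_mul big_allpairs_dep; apply: eq_bigr => p _.
rewrite mulr_sumr; apply: eq_bigr => q _ /=; by rewrite mulrA.
Qed.
Lemma ev_flatten (T : Type) (f : T -> kg k G) s F :
  ev (flatten [seq f t | t <- s]) F = \sum_(t <- s) ev (f t) F.
Proof.
elim: s => [|t s IH] /=; first by rewrite big_nil ev_nil.
by rewrite ev_cat IH big_cons.
Qed.
Lemma ev_ext x F1 F2 : (forall g, F1 g = F2 g) -> ev x F1 = ev x F2.
Proof. by move=> H; apply: eq_bigr => p _; rewrite H. Qed.

Lemma coef_ev x g : kg_coef x g = ev x (fun h => (h == g)%:R).
Proof.
rewrite /kg_coef /ev big_mkcond; apply: eq_bigr => p _.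
by case: eqP => _; rewrite ?mulr1 ?mulr0.
Qed.

Lemma sum_pred1_seq (S : seq G) a (f : G -> k) : uniq S -> a \in S ->
  \sum_(g <- S) (if a == g then f g else 0) = f a.
Proof.
move=> uS aS; rewrite (perm_big _ (perm_to_rem aS)) big_cons eqxx.
rewrite big1_seq; first by rewrite /= addr0.
idtac.
move=> g /= gin; case: eqP => // ag; move: gin; by rewrite (mem_rem_uniq _ uS) inE -ag eqxx.
Qed.

Lemma ev_decomp x F (S : seq G) : uniq S -> {subset map snd x <= S} ->
  ev x F = \sum_(g <- S) kg_coef x g * F g.
Proof.
move=> uS sub.
under eq_bigr => g _ do rewrite coef_ev /ev mulr_suml.
rewrite exchange_big /ev; apply: eq_big_seq => p px /=.
rewrite -(@sum_pred1_seq S p.2 (fun g => p.1 * F g)) //; last first.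
  by apply: sub; apply: map_f.
by apply: eq_bigr => g _; case: eqP => _; rewrite ?mulr1 ?mulr0 ?mul0r.
Qed.

Lemma kg_eq_ev x y : kg_eq x y -> forall F, ev x F = ev y F.
Proof.
move=> H F; pose S := undup (map snd (x ++ y)).
have uS : uniq S by apply: undup_uniq.
rewrite (@ev_decomp x F S) // ?(@ev_decomp y F S) //.
- by apply: eq_bigr => g _; rewrite H.
- by move=> g gy; rewrite mem_undup map_cat mem_cat gy orbT.
- by move=> g gx; rewrite mem_undup map_cat mem_cat gx.
Qed.

Lemma ev_kg_eq x y : (forall F, ev x F = ev y F) -> kg_eq x y.
Proof. by move=> H g; rewrite !coef_ev H. Qed.

End Ev.


Section KG.
Local Open Scope ring_scope.
Variables (k : fieldType) (G : groupType).
Implicit Types (x y z u v : kg k G) (F : G -> k).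

Lemma kg_eqP x y : kg_eq x y <-> forall F, ev x F = ev y F.
Proof. split; [exact: kg_eq_ev | exact: ev_kg_eq]. Qed.

Global Instance kg_eq_Equiv : Equivalence (@kg_eq k G).
Proof.
split.
- by move=> x g.
- by move=> x y H g; rewrite H.
- by move=> x y z H1 H2 g; rewrite H1 H2.
Qed.

Lemma ev_sub x y F : ev (kg_sub x y) F = ev x F - ev y F.
Proof. by rewrite /kg_sub /kg_add ev_cat ev_scale mulN1r. Qed.

Lemma ev_swap x y (H : G -> G -> k) :
  ev x (fun a => ev y (fun b => H a b)) = ev y (fun b => ev x (fun a => H a b)).
Proof.
rewrite /ev; under eq_bigr => p _ do rewrite mulr_sumr.
rewrite exchange_big; apply: eq_bigr => q _; rewrite mulr_sumr.
by apply: eq_bigr => p _; rewrite mulrCA.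
Qed.

Lemma ev_sum (T : Type) x (s : seq T) (f : T -> G -> k) :
  ev x (fun a => \sum_(t <- s) f t a) = \sum_(t <- s) ev x (f t).
Proof.
rewrite /ev; under eq_bigr => p _ do rewrite mulr_sumr.
by rewrite exchange_big.
Qed.

Global Instance mul_Proper : Proper (@kg_eq k G ==> @kg_eq k G ==> @kg_eq k G) (@kg_mul k G).
Proof.
move=> x x' /kg_eqP Hx y y' /kg_eqP Hy; apply/kg_eqP => F.
rewrite !ev_mul Hx; apply: ev_ext => a; exact: Hy.
Qed.

Global Instance add_Proper : Proper (@kg_eq k G ==> @kg_eq k G ==> @kg_eq k G) (@kg_add k G).
Proof.
move=> x x' /kg_eqP Hx y y' /kg_eqP Hy; apply/kg_eqP => F.
by rewrite /kg_add !ev_cat Hx Hy.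
Qed.

Global Instance scale_Proper c : Proper (@kg_eq k G ==> @kg_eq k G) (@kg_scale k G c).
Proof.
move=> x x' /kg_eqP Hx; apply/kg_eqP => F; by rewrite !ev_scale Hx.
Qed.

Global Instance sub_Proper : Proper (@kg_eq k G ==> @kg_eq k G ==> @kg_eq k G) (@kg_sub k G).
Proof.
move=> x x' /kg_eqP Hx y y' /kg_eqP Hy; apply/kg_eqP => F.
by rewrite !ev_sub Hx Hy.
Qed.

Global Instance star_Proper : Proper (@kg_eq k G ==> @kg_eq k G) (@kg_star k G).
Proof.
move=> x x' /kg_eqP Hx; apply/kg_eqP => F; by rewrite !ev_star Hx.
Qed.

Lemma kgmulA x y z : kg_eq (kg_mul (kg_mul x y) z) (kg_mul x (kg_mul y z)).
Proof.
apply/kg_eqP => F; rewrite !ev_mul; apply: ev_ext => a.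
rewrite ev_mul; apply: ev_ext => b; apply: ev_ext => c; by rewrite mulgA.
Qed.

Lemma star_mul x y : kg_eq (kg_star (kg_mul x y)) (kg_mul (kg_star y) (kg_star x)).
Proof.
apply/kg_eqP => F; rewrite ev_star !ev_mul ev_star ev_swap.
apply: ev_ext => b; rewrite ev_star; apply: ev_ext => a; by rewrite invgM.
Qed.

Lemma star_sub x y : kg_eq (kg_star (kg_sub x y)) (kg_sub (kg_star x) (kg_star y)).
Proof. apply/kg_eqP => F; by rewrite ev_star !ev_sub !ev_star. Qed.

Lemma sub_swap x y : kg_eq (kg_sub x y) (kg_scale (-1) (kg_sub y x)).
Proof. apply/kg_eqP => F; rewrite ev_scale !ev_sub; by rewrite mulN1r opprB. Qed.

Lemma mul_scale_r c x y : kg_eq (kg_mul x (kg_scale c y)) (kg_mul (kg_scale c x) y).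
Proof.
apply/kg_eqP => F; rewrite !ev_mul !ev_scale.
under ev_ext => a do rewrite ev_scale.
rewrite /ev mulr_sumr; apply: eq_bigr => p _; by rewrite mulrCA.
Qed.

Lemma mul_scale_l c x y : kg_eq (kg_mul (kg_scale c x) y) (kg_scale c (kg_mul x y)).
Proof.
by apply/kg_eqP => F; rewrite ev_mul ev_scale ev_scale ev_mul.
Qed.

Lemma scale_mul1 c x : kg_eq (kg_scale c x) (kg_mul [:: (c, 1%g)] x).
Proof.
apply/kg_eqP => F; rewrite ev_mul ev_scale /ev big_seq1 /=.
congr (_ * _); apply: eq_bigr => p _; by rewrite mul1g.
Qed.

Lemma mul1x x : kg_eq (kg_mul (kg_of k 1%g) x) x.
Proof.
apply/kg_eqP => F; rewrite ev_mul ev_of; apply: ev_ext => g; by rewrite mul1g.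
Qed.

Lemma mulx1 x : kg_eq (kg_mul x (kg_of k 1%g)) x.
Proof.
apply/kg_eqP => F; rewrite ev_mul; apply: ev_ext => g; by rewrite ev_of mulg1.
Qed.

Definition genI (t : kg k G * kg k G * kg k G * kg k G) : kg k G :=
  kg_mul (kg_mul t.1.1.1
    (kg_sub (kg_mul t.1.1.2 t.1.2) (kg_mul t.1.2 t.1.1.2))) t.2.

Lemma in_IP x : in_I x <-> exists s : seq (kg k G * kg k G * kg k G * kg k G),
   (forall t, t \in s -> kg_eq (kg_star t.1.2) t.1.2) /\
   forall F, ev x F = \sum_(t <- s) ev (genI t) F.
Proof.
split=> -[s [H1 H2]]; exists s; split => //.
  by move=> F; rewrite (kg_eq_ev H2) ev_flatten.
by apply: ev_kg_eq => F; rewrite H2 ev_flatten.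
Qed.

Lemma in_I_eq x y : kg_eq x y -> in_I x -> in_I y.
Proof.
move=> /kg_eqP Hxy /in_IP [s [H1 H2]]; apply/in_IP; exists s; split=> // F.
by rewrite -Hxy.
Qed.

Lemma in_I_nil : @in_I k G [::].
Proof. apply/in_IP; exists [::]; split=> // F; by rewrite ev_nil big_nil. Qed.

Lemma in_I_add x y : in_I x -> in_I y -> in_I (kg_add x y).
Proof.
move=> /in_IP [s1 [H1 H2]] /in_IP [s2 [H3 H4]]; apply/in_IP; exists (s1 ++ s2).
split; first by move=> t; rewrite mem_cat => /orP [] ?; [apply: H1|apply: H3].
by move=> F; rewrite /kg_add ev_cat big_cat H2 H4.
Qed.

Lemma in_I_mull u x : in_I x -> in_I (kg_mul u x).
Proof.
move=> /in_IP [s [H1 H2]]; apply/in_IP.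
exists [seq (kg_mul u t.1.1.1, t.1.1.2, t.1.2, t.2) | t <- s]; split.
  by move=> t /mapP [t' t's ->] /=; apply: H1.
move=> F; rewrite big_map ev_mul.
under ev_ext => a do rewrite H2.
rewrite ev_sum; apply: eq_bigr => t _.
rewrite -ev_mul; apply: kg_eq_ev; rewrite /genI /=.
by rewrite !kgmulA.
Qed.

Lemma in_I_mulr x v : in_I x -> in_I (kg_mul x v).
Proof.
move=> /in_IP [s [H1 H2]]; apply/in_IP.
exists [seq (t.1.1.1, t.1.1.2, t.1.2, kg_mul t.2 v) | t <- s]; split.
  by move=> t /mapP [t' t's ->] /=; apply: H1.
move=> F; rewrite big_map ev_mul H2; apply: eq_bigr => t _.
rewrite -ev_mul; apply: kg_eq_ev; rewrite /genI /=.
by rewrite !kgmulA.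
Qed.

Lemma in_I_scale c x : in_I x -> in_I (kg_scale c x).
Proof. move=> H; apply: (in_I_eq (symmetry (scale_mul1 c x))); exact: in_I_mull. Qed.

Lemma in_I_gen (a b : kg k G) : kg_eq (kg_star b) b ->
  in_I (kg_sub (kg_mul a b) (kg_mul b a)).
Proof.
move=> hb; apply/in_IP; exists [:: (kg_of k 1%g, a, b, kg_of k 1%g)]; split.
  by move=> t; rewrite inE => /eqP -> /=.
move=> F; rewrite big_seq1 /genI /=; apply: kg_eq_ev.
by rewrite mul1x mulx1.
Qed.

Lemma in_I_star x : in_I x -> in_I (kg_star x).
Proof.
move=> /in_IP [s [H1 H2]]; apply/in_IP.
exists [seq (kg_scale (-1) (kg_star t.2), kg_star t.1.1.2, t.1.2, kg_star t.1.1.1) | t <- s].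
split; first by move=> t /mapP [t' t's ->] /=; apply: H1.
move=> F; rewrite big_map ev_star H2; apply: eq_big_seq => t ts.
rewrite -ev_star; apply: kg_eq_ev; rewrite /genI /=.
rewrite star_mul star_mul star_sub !star_mul (H1 t ts).
by rewrite (sub_swap (kg_mul t.1.2 _)) mul_scale_l mul_scale_r kgmulA.
Qed.

End KG.


Section Quot.
Local Open Scope ring_scope.
Local Open Scope quotient_scope.
Variables (k : fieldType) (G : groupType).
Implicit Types (x y z u v : kg k G) (F : G -> k).

Lemma AG_of_eq x y : kg_eq x y -> AG_eq x y.
Proof.
move=> /kg_eqP H; rewrite /AG_eq; apply: (in_I_eq _ (@in_I_nil k G)).
apply/kg_eqP => F; by rewrite ev_nil ev_sub H subrr.
Qed.

Lemma AG_refl x : AG_eq x x. Proof. exact: AG_of_eq. Qed.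

Lemma AG_sym x y : AG_eq x y -> AG_eq y x.
Proof.
move=> H; rewrite /AG_eq; apply: (in_I_eq _ (in_I_scale (-1) H)).
by rewrite -sub_swap.
Qed.

Lemma AG_trans x y z : AG_eq x y -> AG_eq y z -> AG_eq x z.
Proof.
move=> H1 H2; rewrite /AG_eq; apply: (in_I_eq _ (in_I_add H1 H2)).
apply/kg_eqP => F; rewrite /kg_add ev_cat !ev_sub.
by rewrite addrA subrK.
Qed.

Lemma AG_add x x' y y' : AG_eq x x' -> AG_eq y y' -> AG_eq (x ++ y) (x' ++ y').
Proof.
move=> H1 H2; rewrite /AG_eq; apply: (in_I_eq _ (in_I_add H1 H2)).
apply/kg_eqP => F; rewrite /kg_add !(ev_cat, ev_sub).
by rewrite opprD addrACA.
Qed.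

Lemma AG_scale c x x' : AG_eq x x' -> AG_eq (kg_scale c x) (kg_scale c x').
Proof.
move=> H1; rewrite /AG_eq; apply: (in_I_eq _ (in_I_scale c H1)).
apply/kg_eqP => F; by rewrite !(ev_sub, ev_scale) mulrBr.
Qed.

Lemma AG_star x x' : AG_eq x x' -> AG_eq (kg_star x) (kg_star x').
Proof.
move=> H1; rewrite /AG_eq; apply: (in_I_eq _ (in_I_star H1)).
by rewrite star_sub.
Qed.

Lemma AG_mul x x' y y' : AG_eq x x' -> AG_eq y y' ->
  AG_eq (kg_mul x y) (kg_mul x' y').
Proof.
move=> H1 H2; rewrite /AG_eq.
apply: (in_I_eq _ (in_I_add (in_I_mulr y H1) (in_I_mull x' H2))).
apply/kg_eqP => F; rewrite /kg_add ev_cat !ev_sub !ev_mul.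
have E : forall (w : kg k G) (f1 f2 : G -> k),
    ev w (fun a => f1 a - f2 a) = ev w f1 - ev w f2.
  move=> w f1 f2; rewrite /ev -sumrB; apply: eq_bigr => p _; by rewrite mulrBr.
rewrite ev_sub.
have -> : ev x' (fun a => ev (kg_sub y y') (fun b => F (a * b)%g)) =
  ev x' (fun a => ev y (fun b => F (a*b)%g) - ev y' (fun b => F (a*b)%g)).
  by apply: ev_ext => a; rewrite ev_sub.
by rewrite E addrA subrK.
Qed.

Definition AGb x y : bool :=
  if excluded_middle_informative (AG_eq x y) then true else false.

Lemma AGbP x y : AGb x y <-> AG_eq x y.
Proof. rewrite /AGb; case: excluded_middle_informative => //. Qed.

Lemma AGb_refl : ssrbool.reflexive AGb.
Proof. by move=> x; apply/AGbP/AG_refl. Qed.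
Lemma AGb_sym : ssrbool.symmetric AGb.
Proof.
move=> x y; apply/idP/idP => /AGbP H; apply/AGbP; exact: AG_sym.
Qed.
Lemma AGb_trans : ssrbool.transitive AGb.
Proof. move=> y x z /AGbP H1 /AGbP H2; apply/AGbP; exact: AG_trans H2. Qed.

Canonical AG_equiv := @EquivRelPack _ AGb (EquivClass AGb_refl AGb_sym AGb_trans).

Definition A := {eq_quot AG_equiv}.
HB.instance Definition _ := Choice.copy A {eq_quot AG_equiv}.

Definition pA (x : kg k G) : A := \pi_A x.

Lemma pAP x y : pA x = pA y <-> AG_eq x y.
Proof.
split; first by move/eqmodP/AGbP.
by move=> H; apply/eqmodP/AGbP.
Qed.

Lemma reprA (a : A) : pA (repr a) = a.
Proof. exact: reprK. Qed.

Lemma repr_pA x : AG_eq (repr (pA x)) x.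
Proof. by apply/pAP; rewrite reprA. Qed.

Lemma pA_eq x y : kg_eq x y -> pA x = pA y.
Proof. by move=> H; apply/pAP/AG_of_eq. Qed.

Definition zeroA : A := pA [::].
Definition addA (a b : A) : A := pA (repr a ++ repr b).
Definition oppA (a : A) : A := pA (kg_scale (-1) (repr a)).
Definition oneA : A := pA (kg_of k 1%g).
Definition mulAA (a b : A) : A := pA (kg_mul (repr a) (repr b)).

Lemma addAE x y : addA (pA x) (pA y) = pA (x ++ y).
Proof. apply/pAP; apply: AG_add; exact: repr_pA. Qed.
Lemma oppAE x : oppA (pA x) = pA (kg_scale (-1) x).
Proof. apply/pAP; apply: AG_scale; exact: repr_pA. Qed.
Lemma mulAE x y : mulAA (pA x) (pA y) = pA (kg_mul x y).
Proof. apply/pAP; apply: AG_mul; exact: repr_pA. Qed.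

Lemma A_ind (P : A -> Prop) : (forall x, P (pA x)) -> forall a, P a.
Proof. by move=> H a; rewrite -(reprA a). Qed.

Lemma addA_assoc : associative addA.
Proof.
elim/A_ind => x; elim/A_ind => y; elim/A_ind => z.
by rewrite !addAE catA.
Qed.
Lemma addA_comm : commutative addA.
Proof.
elim/A_ind => x; elim/A_ind => y; rewrite !addAE; apply: pA_eq.
apply/kg_eqP => F; by rewrite !ev_cat addrC.
Qed.
Lemma addA_0 : left_id zeroA addA.
Proof. elim/A_ind => x; by rewrite /zeroA addAE. Qed.
Lemma addA_N : left_inverse zeroA oppA addA.
Proof.
elim/A_ind => x; rewrite oppAE addAE; apply: pA_eq.
apply/kg_eqP => F; by rewrite ev_cat ev_scale ev_nil mulN1r addNr.
Qed.

HB.instance Definition _ := GRing.isZmodule.Build A addA_assoc addA_comm addA_0 addA_N.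

Lemma mulA_assoc : associative mulAA.
Proof.
elim/A_ind => x; elim/A_ind => y; elim/A_ind => z.
rewrite !mulAE; apply: pA_eq; by rewrite kgmulA.
Qed.
Lemma mulA_1l : left_id oneA mulAA.
Proof. elim/A_ind => x; rewrite /oneA mulAE; apply: pA_eq; exact: mul1x. Qed.
Lemma mulA_1r : right_id oneA mulAA.
Proof. elim/A_ind => x; rewrite /oneA mulAE; apply: pA_eq; exact: mulx1. Qed.
Lemma mulA_Dl : left_distributive mulAA addA.
Proof.
elim/A_ind => x; elim/A_ind => y; elim/A_ind => z.
rewrite !(addAE, mulAE); apply: pA_eq.
apply/kg_eqP => F; by rewrite !(ev_mul, ev_cat).
Qed.
Lemma mulA_Dr : right_distributive mulAA addA.
Proof.
elim/A_ind => x; elim/A_ind => y; elim/A_ind => z.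
rewrite !(addAE, mulAE); apply: pA_eq.
apply/kg_eqP => F; rewrite ev_mul ev_cat !ev_mul.
under ev_ext => a do rewrite ev_cat.
rewrite /ev -big_split; apply: eq_bigr => p _ /=; by rewrite mulrDr.
Qed.

HB.instance Definition _ := GRing.Zmodule_isPzRing.Build A
  mulA_assoc mulA_1l mulA_1r mulA_Dl mulA_Dr.

Lemma pA_add x y : pA (x ++ y) = pA x + pA y.
Proof. by rewrite -addAE. Qed.
Lemma pA_mul x y : pA (kg_mul x y) = pA x * pA y.
Proof. by rewrite -mulAE. Qed.
Lemma pA_nil : pA [::] = 0.
Proof. by []. Qed.
Lemma pA_N x : pA (kg_scale (-1) x) = - pA x.
Proof. by rewrite -oppAE. Qed.
Lemma pA_sub x y : pA (kg_sub x y) = pA x - pA y.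
Proof. by rewrite /kg_sub /kg_add pA_add pA_N. Qed.
Lemma pA_one : pA (kg_of k 1%g) = 1.
Proof. by []. Qed.

End Quot.


Section Star.
Local Open Scope ring_scope.
Variables (k : fieldType) (G : groupType).
Implicit Types (x y z u v : kg k G) (F : G -> k) (a b c : A k G).

Definition starA a : A k G := pA (kg_star (repr a)).

Lemma starAE x : starA (pA x) = pA (kg_star x).
Proof. apply/pAP; apply: AG_star; exact: repr_pA. Qed.

Lemma starD a b : starA (a + b) = starA a + starA b.
Proof.
elim/A_ind: a => x; elim/A_ind: b => y.
by rewrite -pA_add !starAE -pA_add /kg_star map_cat.
Qed.

Lemma starM a b : starA (a * b) = starA b * starA a.
Proof.
elim/A_ind: a => x; elim/A_ind: b => y.
rewrite -pA_mul !starAE -pA_mul; apply: pA_eq; exact: star_mul.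
Qed.

Lemma starK a : starA (starA a) = a.
Proof.
elim/A_ind: a => x; rewrite !starAE; apply: pA_eq; apply/kg_eqP => F.
rewrite !ev_star; apply: ev_ext => g; by rewrite invgK.
Qed.

Lemma star0 : starA 0 = 0.
Proof. by rewrite -pA_nil starAE. Qed.

Lemma starN a : starA (- a) = - starA a.
Proof.
apply/eqP; rewrite -addr_eq0 -starD addNr star0 //.
Qed.

Lemma starB a b : starA (a - b) = starA a - starA b.
Proof. by rewrite starD starN. Qed.

Definition gam (g : G) : A k G := pA (kg_of k g).

Lemma gamM g h : gam (g * h)%g = gam g * gam h.
Proof.
rewrite /gam -pA_mul; apply: pA_eq; apply/kg_eqP => F.
by rewrite ev_mul !ev_of.
Qed.

Lemma gam1 : gam 1%g = 1.
Proof. by []. Qed.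

Lemma star_gam g : starA (gam g) = gam g^-1%g.
Proof. by rewrite /gam starAE. Qed.

Lemma star1 : starA 1 = 1.
Proof. by rewrite -gam1 star_gam invg1. Qed.

Lemma cent_gen x : kg_eq (kg_star x) x -> forall c, pA x * c = c * pA x.
Proof.
move=> hx; elim/A_ind => y; rewrite -!pA_mul; apply/pAP.
apply: AG_sym; exact: (in_I_gen y hx).
Qed.

Definition TA a := a + starA a.

Lemma TA_cent a c : TA a * c = c * TA a.
Proof.
elim/A_ind: a => x; rewrite /TA starAE -pA_add; apply: cent_gen.
apply/kg_eqP => F; rewrite ev_star !ev_cat !ev_star addrC; congr (_ + _).
by apply: ev_ext => g; rewrite invgK.
Qed.

Lemma star_TA a : starA (TA a) = TA a.
Proof. by rewrite /TA starD starK addrC. Qed.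

Definition emb (e : k) : A k G := pA [:: (e, 1%g)].

Lemma emb_cent (e : k) a : emb e * a = a * emb e.
Proof.
apply: cent_gen; apply/kg_eqP => F; by rewrite ev_star /ev !big_seq1 /= invg1.
Qed.

Lemma star_emb (e : k) : starA (emb e) = emb e.
Proof. by rewrite /emb starAE /kg_star /= invg1. Qed.

Definition Shp a := starA a = a.

Lemma Shp_TA a : Shp (TA a). Proof. exact: star_TA. Qed.

Variable h2 : (2%:R : k) != 0.

Definition hh : A k G := emb 2%:R^-1.

Lemma hh2 : hh + hh = 1.
Proof.
rewrite /hh /emb -pA_add -gam1; apply: pA_eq; apply/kg_eqP => F.
have E : (2%:R : k)^-1 + 2%:R^-1 = 1 by rewrite -mulr2n -(mulr_natr (2%:R^-1)) mulVf.
rewrite ev_cat ev_of /ev !big_seq1 /=.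
by rewrite -mulrDl E mul1r.
Qed.

Lemma Shp_hh : Shp hh. Proof. exact: star_emb. Qed.

Lemma Shp_half a : Shp a -> a = hh * TA a.
Proof.
move=> sa; rewrite /TA sa mulrDr -mulrDl hh2 mul1r //.
Qed.

Lemma Shp_cent a c : Shp a -> a * c = c * a.
Proof.
move=> sa; rewrite (Shp_half sa) -mulrA TA_cent mulrA emb_cent mulrA //.
Qed.

Lemma Shp_mul a b : Shp a -> Shp b -> Shp (a * b).
Proof. move=> sa sb; rewrite /Shp starM sa sb; exact: Shp_cent. Qed.

Lemma Shp_N a : Shp a -> Shp (- a).
Proof. by move=> sa; rewrite /Shp starN sa. Qed.

Lemma Shp_1 : Shp 1. Proof. exact: star1. Qed.

Lemma TA_mulr a c : Shp c -> TA (a * c) = c * TA a.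
Proof.
move=> sc; by rewrite /TA starM sc mulrDr (Shp_cent a sc).
Qed.

Lemma TA_add a b : TA (a + b) = TA a + TA b.
Proof. by rewrite /TA starD addrACA. Qed.
Lemma TA_N a : TA (- a) = - TA a.
Proof. by rewrite /TA starN opprD. Qed.
Lemma TA_sub a b : TA (a - b) = TA a - TA b.
Proof. by rewrite TA_add TA_N. Qed.

Lemma zmod_aux (V : zmodType) (p q r s : V) : p + q = r + s -> p - r = s - q.
Proof.
move=> H; apply/eqP; rewrite subr_eq addrAC (addrC s) -H addrK //.
Qed.

Lemma trace a b : TA (a * b) = TA (b * a).
Proof.
have C1 := TA_cent a b; have C2 := TA_cent b (starA a).
rewrite /TA in C1 C2; rewrite /TA !starM.
rewrite mulrDl mulrDr in C1; rewrite mulrDl mulrDr in C2.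
apply/eqP; rewrite -subr_eq0; apply/eqP.
have E1 := zmod_aux C1.
rewrite (addrC (b * _)) (addrC (starA a * b)) in C2.
have E2 := zmod_aux C2.
by rewrite opprD addrACA E1 E2 addrA subrK subrr.
Qed.

End Star.


Section Main.
Local Open Scope ring_scope.
Variables (k : fieldType) (G : groupType).
Variable h2 : (2%:R : k) != 0.
Implicit Types (x y z u v : kg k G) (F : G -> k) (a b c : A k G).

Local Notation hh := (hh k G).
Local Notation gam := (@gam k G).

Definition DA a (l : G) : A k G :=
  hh * (TA (a * gam l) - TA (a * gam l^-1%g)).

Lemma pA_bar x : pA (kg_bar x) = hh * TA (pA x).
Proof.
by rewrite /kg_bar (pA_eq (scale_mul1 _ _)) pA_mul /kg_add pA_add /TA starAE.
Qed.

Lemma pA_sharp_gen x l : pA (sharp_gen x l) = DA (pA x) l.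
Proof. by rewrite /sharp_gen pA_sub !pA_bar !pA_mul /DA mulrBr. Qed.

Lemma pA_flatten (T : Type) (f : T -> kg k G) s :
  pA (flatten [seq f t | t <- s]) = \sum_(t <- s) pA (f t).
Proof.
elim: s => [|t s IH] /=; first by rewrite big_nil.
by rewrite pA_add IH big_cons.
Qed.

Definition JA (P : G -> Prop) (w : A k G) : Prop :=
  exists s : seq (A k G * A k G * G),
    (forall t, t \in s -> Shp t.1.1 /\ P t.2) /\
    w = \sum_(t <- s) t.1.1 * DA t.1.2 t.2.

Lemma transl P y : in_sharpsharp P y <-> JA P (pA y).
Proof.
split.
  move=> [s [H1 H2]].
  exists [seq (pA t.1.1, pA t.1.2, t.2) | t <- s]; split.
    move=> t /mapP [t' t's ->] /=; have [S1 S2] := H1 t' t's; split => //.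
    by rewrite /Shp starAE; apply/pAP.
  move/pAP: H2 => ->; rewrite pA_flatten big_map; apply: eq_bigr => t _.
  by rewrite pA_mul pA_sharp_gen.
move=> [s [H1 H2]].
exists [seq (repr t.1.1, repr t.1.2, t.2) | t <- s]; split.
  move=> t /mapP [t' t's ->] /=; have [S1 S2] := H1 t' t's; split => //.
  by apply/pAP; rewrite -starAE reprA.
apply/pAP; rewrite H2 pA_flatten big_map; apply: eq_bigr => t _.
by rewrite pA_mul pA_sharp_gen !reprA.
Qed.

Lemma JA0 P : JA P 0.
Proof. by exists [::]; split => //; rewrite big_nil. Qed.

Lemma JA_add P w1 w2 : JA P w1 -> JA P w2 -> JA P (w1 + w2).
Proof.
move=> [s1 [H1 ->]] [s2 [H2 ->]]; exists (s1 ++ s2); split; last by rewrite big_cat.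
by move=> t; rewrite mem_cat => /orP [] ?; [apply: H1|apply: H2].
Qed.

Lemma JA_mul P c w : Shp c -> JA P w -> JA P (c * w).
Proof.
move=> sc [s [H1 ->]]; exists [seq (c * t.1.1, t.1.2, t.2) | t <- s]; split.
  move=> t /mapP [t' t's ->] /=; have [S1 S2] := H1 t' t's; split => //.
  exact: Shp_mul.
rewrite big_map mulr_sumr; apply: eq_bigr => t _; by rewrite mulrA.
Qed.

Lemma JA_N P w : JA P w -> JA P (- w).
Proof.
move=> H; rewrite -mulN1r; apply: JA_mul => //; apply: Shp_N; exact: Shp_1.
Qed.

Lemma JA_gen (P : G -> Prop) a l : P l -> JA P (DA a l).
Proof.
move=> Pl; exists [:: (1, a, l)]; split; last by rewrite big_seq1 mul1r.
move=> t; rewrite inE => /eqP -> /=; split => //; exact: Shp_1.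
Qed.

Definition tau (g : G) := hh * TA (gam g).

Lemma Shp_tau g : Shp (tau g).
Proof. apply: Shp_mul => //; [exact: Shp_hh | exact: Shp_TA]. Qed.

Lemma hh_double w : hh * (w + w) = w.
Proof. by rewrite mulrDr -mulrDl hh2 // mul1r. Qed.

Lemma Dform a g : DA a g = TA (a * gam g) - tau g * TA a.
Proof.
have E : gam g^-1%g = TA (gam g) - gam g.
  by rewrite /TA star_gam addrC addKr.
rewrite /DA E (mulrBr a) TA_sub (TA_mulr h2 a (Shp_TA (gam g))).
by rewrite opprB addrA mulrBr hh_double /tau mulrA.
Qed.

Section WithL.
Variable L : G -> Prop.

Definition Mset (g : G) := forall a, JA L (DA a g).

Lemma M1 : Mset 1%g.
Proof. by move=> a; rewrite /DA invg1 subrr mulr0; apply: JA0. Qed.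

Lemma Minv g : Mset g -> Mset g^-1%g.
Proof.
move=> Mg a; have := JA_N (Mg a).
by rewrite /DA invgK -mulrN opprB.
Qed.

Lemma Mmul g h : Mset g -> Mset h -> Mset (g * h)%g.
Proof.
move=> Mg Mh a.
have J1 := Mh (a * gam g).
have J2 := JA_mul (Shp_tau h) (Mg a).
have J3 := JA_mul (Shp_mul h2 (Shp_N (Shp_TA a)) (Shp_hh k G)) (Mh (gam g)).
have := JA_add (JA_add J1 J2) J3.
congr (JA L _); rewrite !Dform gamM mulrA.
set P := TA (a * gam g * gam h); set Q := TA (a * gam g).
set R := TA a; set V := TA (gam g); set W := TA (gam h).
rewrite /tau -/V -/W -gamM; set U := TA (gam (g * h)%g).
have hc : forall w : A k G, hh * w = w * hh by move=> w; exact: emb_cent.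
have E1 : R * hh * U = hh * U * R by rewrite -mulrA TA_cent.
have E2 : R * hh * (hh * W * V) = hh * W * (hh * V * R).
  rewrite -mulrA TA_cent !mulrA; congr (_ * _ * _).
  by rewrite -(mulrA hh W hh) -hc mulrA.
rewrite [hh * W * (Q - _)]mulrBr addrA subrK -addrA; congr (P + _).
rewrite mulrBr !mulNr opprK E1 E2.
by rewrite addrC -addrA subrr addr0.
Qed.

Lemma Mconj g h : Mset g -> Mset (g ^ h)%g.
Proof.
move=> Mg a; set b := gam h * a * gam h^-1%g.
suff -> : DA a (g ^ h)%g = DA b g by apply: Mg.
rewrite !Dform conjgE !gamM.
have E1 : TA (a * (gam h^-1%g * (gam g * gam h))) = TA (b * gam g).
  by rewrite !mulrA trace /b !mulrA.
have E2 : tau (h^-1 * (g * h))%g = tau g.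
  by rewrite /tau !gamM mulrA trace mulrA -gamM mulgV gam1 mul1r.
have E3 : TA b = TA a.
  by rewrite /b -mulrA trace -mulrA -gamM mulVg gam1 mulr1.
by rewrite E1 E3 E2.
Qed.

Lemma M_normal : is_normal Mset.
Proof.
split; last by move=> x g Mx; apply: Mconj.
split; first exact: M1.
by move=> x y Mx My; apply: Mmul => //; apply: Minv.
Qed.

Lemma ML l : L l -> Mset l.
Proof. by move=> Ll a; apply: JA_gen. Qed.

End WithL.

Lemma JA_sub_closure (L K : G -> Prop) (hM : forall g, K g -> Mset L g) w :
  JA K w -> JA L w.
Proof.
move=> [s [H1 ->]]; elim: s H1 => [|t s IH] H1; first by rewrite big_nil; apply: JA0.
rewrite big_cons; apply: JA_add.
  have [S1 S2] := H1 t (mem_head _ _).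
  apply: JA_mul => //; exact: hM.
by apply: IH => t' t's; apply: H1; rewrite inE t's orbT.
Qed.

End Main.

Theorem mainTheorem4 (k : fieldType) (hk : [pchar k]%R =i pred0)
  (G : groupType) (K L : G -> Prop)
  (hK : is_normal K) (hLK : forall l, L l -> K l)
  (hcl : is_normal_closure L K) :
  forall y : kg k G, in_sharpsharp L y <-> in_sharpsharp K y.
Proof.
have h2 : ((2%:R)%R : k) != 0%R.
  by have := (GRing.pcharf0P k).1 hk 2; rewrite /= => ->.
move=> y; split.
  move=> [s [H1 H2]]; exists s; split => // t ts.
  by have [S1 S2] := H1 t ts; split => //; apply: hLK.
move=> /transl H; apply/transl.
apply: (JA_sub_closure h2 _ H) => g Kg.
case: hcl => _ [_ hN]; apply: (hN (Mset k L)) => //.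
  exact: M_normal.
exact: ML.
Qed.
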